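(* For integers $n \geq 3$ and $m \geq 1$, $$\chi_\rho(FSSD_m(C_n)) = \begin{cases} 3, & n \text{ even},\\ 4, & n \text{ odd}.\end{cases}$$
   Context: All graphs are finite and simple. $C_n$ is the cycle on $n$ vertices. For a positive integer $i$, an $i$-packing in a graph is a set of vertices any two distinct members of which are at distance greater than $i$. The packing chromatic number $\chi_\rho(H)$ is the smallest integer $k$ such that $V(H)$ can be partitioned into sets $V_1,\dots,V_k$ with each $V_i$ an $i$-packing. For a positive integer $m$, $FSSD_m(G)$ is obtained from $G$ by replacing each edge $uv$ of $G$ by a copy of $K_{2,m}$: the edge $uv$ is deleted and $m$ new vertices are added, each adjacent to exactly $u$ and $v$. *)

(* Defs.v *)
From mathcomp Require Import all_boot.
Set Implicit Arguments. Unset Strict Implicit. Unset Printing Implicit Defensive.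

(* A finite simple graph is a symmetric irreflexive relation [e : rel T] on a finType T. *)

Fixpoint within (T : finType) (e : rel T) (k : nat) (x y : T) : bool :=
  match k with
  | 0 => x == y
  | k'.+1 => within e k' x y || [exists z, within e k' x z && e z y]
  end.

Definition is_packing (T : finType) (e : rel T) (i : nat) (S : {set T}) : bool :=
  [forall x in S, forall y in S, (x != y) ==> ~~ within e i x y].

(* A packing k-colouring: c x = j (j : 'I_k) means x is in V_{j+1};
   each class V_i must be an i-packing. *)
Definition packing_coloring (T : finType) (e : rel T) (k : nat) (c : T -> 'I_k) : bool :=
  [forall j : 'I_k, is_packing e j.+1 [set x | c x == j]].

Definition has_packing_coloring (T : finType) (e : rel T) (k : nat) : bool :=
  [exists c : {ffun T -> 'I_k}, packing_coloring e c].

Lemma has_packing_coloring_card (T : finType) (e : rel T) :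
  exists k, has_packing_coloring e k.
Proof.
exists #|T|; apply/existsP; exists [ffun x => enum_rank x].
apply/forallP => j; apply/forallP => x; apply/implyP => Hx.
apply/forallP => y; apply/implyP => Hy; apply/implyP => Hxy.
move: Hx Hy; rewrite !inE !ffunE => /eqP Hx /eqP Hy.
by move: Hxy; rewrite -(enum_rankK x) -(enum_rankK y) Hx Hy eqxx.
Qed.

Definition pchi (T : finType) (e : rel T) : nat :=
  ex_minn (has_packing_coloring_card e).

Definition cycle_rel (n : nat) : rel 'I_n :=
  fun i j => (j == (i.+1 %% n) :> nat) || (i == (j.+1 %% n) :> nat).

Definition is_edge (T : finType) (e : rel T) (S : {set T}) : bool :=
  [exists x, exists y, e x y && (S == [set x; y])].

Definition edge_of (T : finType) (e : rel T) := {S : {set T} | is_edge e S}.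

(* FSSD_m(G): vertices V(G) + E(G) x 'I_m ; new vertex (uv, j) adjacent exactly to u and v. *)
Definition fssd_vtx (T : finType) (e : rel T) (m : nat) : finType :=
  (T + (edge_of e * 'I_m))%type.

Definition fssd (T : finType) (e : rel T) (m : nat) : rel (fssd_vtx e m) :=
  fun a b => match a, b with
  | inl x, inr (s, _) => x \in val s
  | inr (s, _), inl x => x \in val s
  | _, _ => false
  end.

(* Main.v *)
Require Import Defs.
From mathcomp Require Import all_boot zify.
Set Implicit Arguments. Unset Strict Implicit. Unset Printing Implicit Defensive.

Lemma within_pathP (T : finType) (e : rel T) k x y :
  within e k x y -> exists p, [/\ size p <= k, path e x p & last x p = y].
Proof.
elim: k y => [|k IH] y /=.
  by move/eqP=> <-; exists [::].
case/orP=> [/IH [p [H1 H2 H3]] | /existsP [z /andP [/IH [p [H1 H2 H3]] Hzy]]].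
  by exists p; split=> //; exact: leqW.
exists (rcons p y); rewrite size_rcons rcons_path last_rcons H2 H3 Hzy; split=>//.
Qed.

Lemma path_within (T : finType) (e : rel T) x p :
  path e x p -> within e (size p) x (last x p).
Proof.
elim/last_ind: p => [|p y IH] /=; first by rewrite eqxx.
rewrite rcons_path size_rcons last_rcons => /andP [Hp Hy] /=.
apply/orP; right; apply/existsP; exists (last x p); by rewrite IH.
Qed.

Lemma within_mono (T : finType) (e : rel T) k k' x y :
  k <= k' -> within e k x y -> within e k' x y.
Proof.
move=> /subnK <-; elim: (k' - k) => [|d IH] // H.
by rewrite addSn /= IH.
Qed.

Lemma pc_no (T : finType) (e : rel T) K (c : T -> 'I_K) x y :
  packing_coloring e c -> x != y -> c x = c y -> ~~ within e (c x).+1 x y.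
Proof.
move=> /forallP /(_ (c x)) /forallP /(_ x) /implyP H Hxy Hc.
have Hx : x \in [set z | c z == c x] by rewrite inE.
have Hy : y \in [set z | c z == c x] by rewrite inE Hc.
by move: (H Hx) => /forallP /(_ y) /implyP /(_ Hy) /implyP; apply.
Qed.

Lemma hpc_of (T : finType) (e : rel T) K (f : T -> nat) :
  (forall x, f x < K) ->
  (forall x y, x != y -> f x = f y -> ~~ within e (f x).+1 x y) ->
  has_packing_coloring e K.
Proof.
move=> HK Hp; apply/existsP; exists [ffun x => Ordinal (HK x)].
apply/forallP => j; apply/forallP => x; apply/implyP; rewrite inE ffunE => /eqP Hx.
apply/forallP => y; apply/implyP; rewrite inE ffunE => /eqP Hy.
apply/implyP => Hxy.
have := Hp x y Hxy; rewrite -Hx /=; apply.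
by have := congr1 val Hx; have := congr1 val Hy => /= -> ->.
Qed.

Lemma seq_contra (col : nat -> nat) N K :
  (forall t, col t < K) -> (forall t, col (t + N) = col t) ->
  (forall t, col t <> col t.+1) ->
  (forall t, col t = col t.+2 -> col t = 0) ->
  (forall t, col t = col t.+3 -> col t <= 1) ->
  K <= 2 \/ (odd (N./2) /\ ~~ odd N /\ 2 <= N /\ K <= 3) -> False.
Proof.
move=> HK Hper HA HB HC [HK2|[Ho [He [HN HK3]]]].
  have h0 := HK 0; have h1 := HK 1; have h2 := HK 2; have h3 := HK 3.
  have a0 := HA 0; have a1 := HA 1; have a2 := HA 2; have b0 := HB 0; have b1 := HB 1.
  lia.
have step1 : forall t, col t = 0 \/ col t.+1 = 0.
  move=> t.
  have per : col (t + (N - 2)).+2 = col t.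
    by rewrite -(Hper t); congr col; lia.
  have per3 : col (t + (N - 2)).+3 = col t.+1.
    have -> : (t + (N - 2)).+3 = t.+1 + N by lia.
    exact: Hper.
  have h0 := HK t; have h1 := HK t.+1; have a0 := HA t.
  case: (posnP (col t)) => [->|p0]; first by left.
  right; case: (posnP (col t.+1)) => [//|p1]; exfalso.
  have [[c0 c1]|[c0 c1]] : (col t = 1 /\ col t.+1 = 2) \/ (col t = 2 /\ col t.+1 = 1) by lia.
    have m1 : col (t + (N - 2)).+1 = 0.
      move: (HA (t + (N - 2)).+1) (HB (t + (N - 2)).+1) (HK (t + (N - 2)).+1).
      rewrite per per3 c0 c1; lia.
    move: (HA (t + (N - 2))) (HB (t + (N - 2))) (HC (t + (N - 2))) (HK (t + (N - 2))).
    rewrite m1 per per3 c0 c1; lia.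
  have m2 : col t.+2 = 0.
    move: (HA t.+1) (HB t) (HK t.+2); rewrite c0 c1; lia.
  move: (HA t.+2) (HB t.+1) (HC t) (HK t.+3); rewrite m2 c0 c1; lia.
have [p [Hp0 Hp]] : exists p, p <= 1 /\ col p <> 0.
  have := HA 0; case: (step1 0) => H HA0; first by exists 1; split=> //; lia.
  by exists 0; split=> //; lia.
have ind : forall k, col (p + k.*2) <> 0 /\ col (p + k.*2) = (if odd k then 3 - col p else col p).
  elim=> [|k [IH1 IH2]]; first by rewrite addn0.
  have e2 : p + k.+1.*2 = (p + k.*2).+2 by lia.
  rewrite e2 /=.
  have y0 : col (p + k.*2).+2 <> 0.
    move: (step1 (p + k.*2)) (HA (p + k.*2).+1) IH1; lia.
  have y1 : col (p + k.*2).+2 = 3 - col (p + k.*2).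
    move: (HB (p + k.*2)) (HK (p + k.*2)) (HK (p + k.*2).+2) y0 IH1; lia.
  rewrite y1; split; first by move: (HK (p + k.*2)) IH1; lia.
  move: IH2 (HK p) (HK (p + k.*2)); case: (odd k) => /=; lia.
have [_ H] := ind (N./2).
have e3 : p + (N./2).*2 = p + N by lia.
rewrite e3 Hper Ho in H; move: (HK p) Hp H; lia.
Qed.

Definition idx n (Hn : 0 < n) (k : nat) : 'I_n := Ordinal (ltn_pmod k Hn).

Lemma edge_proof n (Hn : 0 < n) (i : 'I_n) : is_edge (@cycle_rel n) [set i; idx Hn i.+1].
Proof.
apply/existsP; exists i; apply/existsP; exists (idx Hn i.+1).
by rewrite eqxx andbT /cycle_rel /= eqxx.
Qed.

Definition Ed n (Hn : 0 < n) (i : 'I_n) : edge_of (@cycle_rel n) :=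
  exist (fun S => is_edge (@cycle_rel n) S) _ (edge_proof Hn i).

Definition vt n m (Hn : 0 < n) (Hm : 0 < m) (t : nat) : fssd_vtx (@cycle_rel n) m :=
  if odd t then inr (Ed Hn (idx Hn t./2), Ordinal Hm) else inl (idx Hn t./2).

Lemma modS_mod a n : ((a %% n).+1) %% n = a.+1 %% n.
Proof. by rewrite -addn1 modnDml addn1. Qed.

Lemma fssd_neq n m (x y : fssd_vtx (@cycle_rel n) m) : fssd x y -> x != y.
Proof. by case: x => [?|[??]]; case: y => [?|[??]]. Qed.

Section S.
End S.

Lemma vt_adj n m (Hn : 0 < n) (Hm : 0 < m) t : fssd (vt Hn Hm t) (vt Hn Hm t.+1).
Proof.
rewrite /vt /=; case: (boolP (odd t)) => Ho /=.
  rewrite !inE; apply/orP; right; apply/eqP; apply: val_inj => /=.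
  rewrite modS_mod; congr modn; lia.
have -> : uphalf t = t./2 by lia.
by rewrite !inE eqxx.
Qed.

Lemma vt_per n m (Hn : 0 < n) (Hm : 0 < m) t : vt Hn Hm (t + n.*2) = vt Hn Hm t.
Proof.
have Ho : odd (t + n.*2) = odd t by lia.
have Hi : idx Hn (t + n.*2)./2 = idx Hn t./2.
  apply: val_inj => /=; have -> : (t + n.*2)./2 = t./2 + n by lia.
  by rewrite modnDr.
by rewrite /vt Ho Hi.
Qed.

Lemma mod_neq a n d : d < n -> 0 < d -> a %% n != (a + d) %% n.
Proof.
move=> Hd Hd0; rewrite -{1}[a]addn0 eqn_modDl mod0n modn_small //; lia.
Qed.

Lemma idx_neq1 n (Hn : 0 < n) a : 1 < n -> idx Hn a != idx Hn a.+1.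
Proof.
move=> H; apply/negP => /eqP /(congr1 val) /= /eqP.
by rewrite -addn1 (negbTE (mod_neq _ _ _)).
Qed.

Lemma idx_neq2 n (Hn : 0 < n) a : 2 < n -> idx Hn a != idx Hn (idx Hn a.+1).+1.
Proof.
move=> H; apply/negP => /eqP /(congr1 val) /= /eqP.
by rewrite modS_mod -addn2 (negbTE (mod_neq _ _ _)).
Qed.

Lemma vt_neq2 n m (Hn : 0 < n) (Hm : 0 < m) t : 2 < n -> vt Hn Hm t != vt Hn Hm t.+2.
Proof.
move=> H3; rewrite /vt /=; case: (odd t) => /=.
  apply/negP => /eqP [] /(congr1 (fun s : {set 'I_n} => idx Hn t./2 \in s)).
  rewrite !inE eqxx /= => /esym /orP [].
    by rewrite (negbTE (idx_neq1 _ _ _)) //; lia.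
  by rewrite (negbTE (idx_neq2 _ _ _)).
apply/negP => /eqP [] /eqP.
    by rewrite -addn1 (negbTE (mod_neq _ _ _)) //; lia.
Qed.

Lemma vt_neq3 n m (Hn : 0 < n) (Hm : 0 < m) t : vt Hn Hm t != vt Hn Hm t.+3.
Proof.
rewrite /vt /=.
by case: (odd t).
Qed.

Lemma no_col n m K (c : fssd_vtx (@cycle_rel n) m -> 'I_K) :
  2 < n -> 0 < m -> packing_coloring (@fssd _ (@cycle_rel n) m) c ->
  K <= 2 \/ (odd n /\ K <= 3) -> False.
Proof.
move=> H3 Hm Hc HK; have Hn : 0 < n by lia.
pose col t := val (c (vt Hn Hm t)).
apply: (@seq_contra col n.*2 K).
- by move=> t; exact: ltn_ord.
- by move=> t; rewrite /col vt_per.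
- move=> t Heq.
  have Hx := fssd_neq (vt_adj Hn Hm t).
  have Hcc := val_inj Heq.
  have := pc_no Hc Hx Hcc; apply/negP/negPn.
  apply: (@within_mono _ _ 1) => //.
  have := @path_within _ (@fssd _ (@cycle_rel n) m) (vt Hn Hm t) [:: vt Hn Hm t.+1].
  by apply; rewrite /= vt_adj.
- move=> t Heq; apply/eqP; rewrite -leqn0 leqNgt; apply/negP => Hpos.
  have Hx := vt_neq2 Hn Hm t H3.
  have Hcc := val_inj Heq.
  have := pc_no Hc Hx Hcc; apply/negP/negPn.
  apply: (@within_mono _ _ 2) => //.
  have := @path_within _ (@fssd _ (@cycle_rel n) m) (vt Hn Hm t) [:: vt Hn Hm t.+1; vt Hn Hm t.+2].
  by apply; rewrite /= !vt_adj.
- move=> t Heq; rewrite leqNgt; apply/negP => Hpos.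
  have Hx := vt_neq3 Hn Hm t.
  have Hcc := val_inj Heq.
  have := pc_no Hc Hx Hcc; apply/negP/negPn.
  apply: (@within_mono _ _ 3) => //.
  have := @path_within _ (@fssd _ (@cycle_rel n) m) (vt Hn Hm t) [:: vt Hn Hm t.+1; vt Hn Hm t.+2; vt Hn Hm t.+3].
  by apply; rewrite /= !vt_adj.
- rewrite doubleK odd_double /=; case: HK => [?|[??]]; [left|right] => //; lia.
Qed.

Definition fcol n m (x : fssd_vtx (@cycle_rel n) m) : nat :=
  match x with
  | inr _ => 0
  | inl i => if odd n && (val i == n.-1) then 3 else if odd i then 2 else 1
  end.

Lemma fcol_spec n m (i : 'I_n) :
  (@fcol n m (inl i) = 3 /\ odd n /\ (i:nat) = n.-1) \/
  (@fcol n m (inl i) = 2 /\ odd i /\ ~ (odd n /\ (i:nat) = n.-1)) \/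
  (@fcol n m (inl i) = 1 /\ ~~ odd i /\ ~ (odd n /\ (i:nat) = n.-1)).
Proof.
rewrite /fcol /=; case: ifP => H1.
  by left; move/andP: H1 => [? /eqP]; split.
have H1' : ~ (odd n /\ (i:nat) = n.-1).
  by move=> [a b]; move: H1; rewrite a b eqxx.
by right; case: ifP => H2; [left | right]; split=> //; rewrite H2.
Qed.

Lemma inl_close n m (i j : 'I_n) k : k <= 3 ->
  within (@fssd _ (@cycle_rel n) m) k (inl i) (inl j) ->
  i = j \/ cycle_rel i j \/ cycle_rel j i.
Proof.
move=> Hk /within_pathP [p [Hs Hp Hl]].
case: p Hs Hp Hl => [|a [|b [|c [|d p]]]] //= Hs.
- by move=> _ [->]; left.
- by move=> /andP [] ; case: a.
- case: a => [a|[s o]] /andP [] //= Hi /andP [] Hb _ Hl.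
  subst b; move: Hb => /= Hj.
  case: s Hi Hj => S /= /existsP [x /existsP [y /andP [Hxy /eqP ->]]].
  rewrite !inE => /orP [] /eqP -> /orP [] /eqP ->; try by left.
    by right; left.
  by right; right.
- case: a => [a|[s o]] /andP [] //= _ /andP [].
  by case: b => [b|[s' o']] //= _ /andP [] ; case: c.
- by move=> *; lia.
Qed.

Lemma inr_close n m (a b : edge_of (@cycle_rel n) * 'I_m) :
  within (@fssd _ (@cycle_rel n) m) 1 (inr a) (inr b) -> a = b.
Proof.
move=> /within_pathP [p [Hs Hp Hl]].
case: p Hs Hp Hl => [|x [|y p]] //= Hs.
- by move=> _ [].
- by case: a => [s o]; case: x => [x|[s' o']] //= /andP [] _ _ <-.
Qed.

Lemma modS_cases n (i : 'I_n) : i.+1 %% n = i.+1 \/ (i.+1 = n /\ i.+1 %% n = 0).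
Proof.
have := ltn_ord i; rewrite leq_eqVlt => /orP [/eqP H|H].
  by right; rewrite H modnn.
by left; rewrite modn_small.
Qed.

Lemma cyc_cases n (i j : 'I_n) : cycle_rel i j ->
  ((j:nat) = i.+1) \/ (i.+1 = n /\ (j:nat) = 0) \/ ((i:nat) = j.+1) \/ (j.+1 = n /\ (i:nat) = 0).
Proof.
rewrite /cycle_rel => /orP [] /eqP H.
  by case: (modS_cases i) => [H'|[H1 H2]]; rewrite ?H' ?H2 in H; lia.
by case: (modS_cases j) => [H'|[H1 H2]]; rewrite ?H' ?H2 in H; lia.
Qed.

Lemma up n m : 2 < n ->
  has_packing_coloring (@fssd _ (@cycle_rel n) m) (if odd n then 4 else 3).
Proof.
move=> H3; apply: (@hpc_of _ _ _ (@fcol n m)).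
  move=> [i|a]; last by rewrite /=; case: odd.
  have := fcol_spec m i; case Ho: (odd n); move: (fcol (inl i)) => f; lia.
move=> [i|a] [j|b] Hxy Hf; apply/negP => Hw.
- have Si := fcol_spec m i; have Sj := fcol_spec m j.
  have Hi := ltn_ord i; have Hj := ltn_ord j.
  move: Si Sj Hf Hw; move: (@fcol n m (inl i)) (@fcol n m (inl j)) => fi fj Si Sj Hf Hw.
  have [H33|H33] : (fi = 3) \/ (fi <= 2) by lia.
    have Hij : i = j by apply: val_inj; change (nat_of_ord i = nat_of_ord j); lia.
    by move: Hxy; rewrite Hij eqxx.
  have Hle : fi.+1 <= 3 by lia.
  have := inl_close (leqnn 3) (within_mono Hle Hw).
  case=> [Hij|[/cyc_cases H|/cyc_cases H]].
  + by move: Hxy; rewrite Hij eqxx.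
  + lia.
  + lia.
- have Si := fcol_spec m i; move: Si Hf; move: (@fcol n m (inl i)) => fi; rewrite /=; lia.
- have Sj := fcol_spec m j; move: Sj Hf; move: (@fcol n m (inl j)) => fj; rewrite /=; lia.
- by move: Hxy; rewrite (inr_close Hw) eqxx.
Qed.

Theorem proposition7 (n m : nat) :
  3 <= n -> 1 <= m ->
  pchi (@fssd _ (@cycle_rel n) m) = (if odd n then 4 else 3).
Proof.
move=> H3 Hm; rewrite /pchi; case: ex_minnP => k Hk Hmin.
have Hle := Hmin _ (up m H3).
apply/eqP; rewrite eqn_leq Hle /= leqNgt; apply/negP => Hlt.
move: Hk => /existsP [c Hc].
apply: (no_col H3 Hm Hc).
by case: (odd n) Hlt => /= Hlt; [right; split|left]; lia.
Qed.
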